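(* Let $(E,(\cdot,\cdot),\mathcal H)$ be an extended affine Lie algebra with root system $R$. Then $E$ is tame if and only if for each $\sigma\in R^0$, $$E_\sigma\cap E_c^\perp=Z(E_c)\cap\sum_{\alpha\in R^\times}[E_{\alpha+\sigma},E_{-\alpha}].$$
   Context: All Lie algebras are over $\mathbb C$. An extended affine Lie algebra (EALA) is a triple $(E,(\cdot,\cdot),\mathcal H)$ where $E$ is a Lie algebra, $\mathcal H$ a subalgebra and $(\cdot,\cdot)$ a bilinear form on $E$ such that: (EA1) the form is symmetric, non-degenerate and invariant; (EA2) $\mathcal H$ is finite-dimensional, $E=\bigoplus_{\alpha\in\mathcal H^*}E_\alpha$ with $E_\alpha=\{x:[h,x]=\alpha(h)x\ \forall h\in\mathcal H\}$ and $E_0=\mathcal H$; the root system is $R=\{\alpha:E_\alpha\neq0\}$ (with $E_\beta=0$ for $\beta\notin R$); $t_\alpha\in\mathcal H$ is given by $\alpha(h)=(h,t_\alpha)$, $(\alpha,\beta):=(t_\alpha,t_\beta)$, $R^\times=\{\alpha\in R:(\alpha,\alpha)\neq0\}$, $R^0=R\setminus R^\times$; (EA3) $\mathrm{ad}\,x$ is locally nilpotent for $x\in E_\alpha$, $\alpha\in R^\times$; (EA4) $R$ is discrete; (EA5) $R^\times$ is connected (not a union of two nonempty mutually orthogonal subsets) and every isotropic root is non-isolated. Root systems are assumed reduced. The core $E_c$ is the subalgebra generated by the $E_\alpha$, $\alpha\in R^\times$; $E_c^\perp$ is its orthogonal complement in $E$ and $Z(E_c)$ its center. $E$ is tame if $E_c^\perp=Z(E_c)$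 (equivalently $E_c^\perp\subseteq Z(E_c)$). *)

(* Defs.v *)
From HB Require Import structures.
From mathcomp Require Import all_boot all_order all_algebra complex.
From mathcomp Require Import Rstruct.
Set Implicit Arguments.
Unset Strict Implicit.
Unset Printing Implicit Defensive.
Import Order.TTheory GRing.Theory Num.Theory.
Local Open Scope ring_scope.

Definition CC : numClosedFieldType := (Rdefinitions.R)[i].

Section EALA.
Variable E : lmodType CC.
Variable br : E -> E -> E.
Variable form : E -> E -> CC.
Variable H : E -> Prop.

Definition is_lie_algebra : Prop :=
  [/\ forall (a : CC) (x y z : E), br (a *: x + y) z = a *: br x z + br y z,
      forall (a : CC) (x y z : E), br z (a *: x + y) = a *: br z x + br z y,
      forall x : E, br x x = 0
    & forall x y z : E, br x (br y z) + br y (br z x) + br z (br x y) = 0].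

Definition EA1 : Prop :=
  [/\ forall (a : CC) (x y z : E), form (a *: x + y) z = a * form x z + form y z,
      forall x y : E, form x y = form y x,
      forall x : E, (forall y : E, form x y = 0) -> x = 0
    & forall x y z : E, form (br x y) z = form x (br y z)].

(* Elements of H^* are represented by functions E -> C, only their values
   on H matter. *)
Definition root_space (alpha : E -> CC) (x : E) : Prop :=
  forall h, H h -> br h x = alpha h *: x.

Definition is_root (alpha : E -> CC) : Prop :=
  exists x, root_space alpha x /\ x <> 0.

Definition t_of (alpha : E -> CC) (t : E) : Prop :=
  H t /\ forall h, H h -> alpha h = form h t.

Definition nonisotropic (alpha : E -> CC) : Prop :=
  exists t, t_of alpha t /\ form t t != 0.

Definition Rx (alpha : E -> CC) : Prop := is_root alpha /\ nonisotropic alpha.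
Definition R0 (alpha : E -> CC) : Prop := is_root alpha /\ ~ nonisotropic alpha.

Definition orth (alpha beta : E -> CC) : Prop :=
  forall ta tb, t_of alpha ta -> t_of beta tb -> form ta tb = 0.

Definition fadd (f g : E -> CC) : E -> CC := fun x => f x + g x.
Definition fopp (f : E -> CC) : E -> CC := fun x => - f x.
Definition fzero : E -> CC := fun _ => 0.

Definition EA2 : Prop :=
  [/\
      exists (n : nat) (hs : 'I_n -> E),
        forall x, H x <-> exists c : 'I_n -> CC, x = \sum_(i < n) c i *: hs i,
      forall x y, H x -> H y -> H (br x y),
      (* E is the sum of the root spaces (directness is automatic) *)
      forall x : E, exists s : seq ((E -> CC) * E),
        (forall p, List.In p s -> root_space p.1 p.2) /\
        x = \sum_(p <- s) p.2
    &
      forall x, root_space fzero x <-> H x].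

Definition EA3 : Prop :=
  forall alpha x, Rx alpha -> root_space alpha x ->
    forall y, exists n : nat, iter n (br x) y = 0.

(* (EA4): R is discrete in H^* (for the weak topology on the
   finite-dimensional space H^*, which is the usual one). *)
Definition EA4 : Prop :=
  forall alpha, is_root alpha ->
    exists (n : nat) (hs : 'I_n -> E) (eps : CC),
      [/\ (forall i, H (hs i)), 0 < eps &
          forall beta, is_root beta ->
            (forall i, `|beta (hs i) - alpha (hs i)| < eps) ->
            forall h, H h -> beta h = alpha h].

Definition EA5 : Prop :=
  (* R^x is connected *)
  (forall A B : (E -> CC) -> Prop,
     (forall alpha, Rx alpha <-> A alpha \/ B alpha) ->
     (exists alpha, A alpha) -> (exists beta, B beta) ->
     ~ (forall alpha beta, A alpha -> B beta -> orth alpha beta))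
  /\
  (forall sigma, R0 sigma -> exists alpha, Rx alpha /\ is_root (fadd alpha sigma)).

Definition reduced : Prop :=
  forall alpha, Rx alpha -> ~ is_root (fadd alpha alpha).

Definition is_EALA : Prop :=
  [/\ is_lie_algebra, EA1, EA2, EA3 & [/\ EA4, EA5 & reduced]].

Inductive core : E -> Prop :=
  | core_root : forall alpha x, Rx alpha -> root_space alpha x -> core x
  | core_zero : core 0
  | core_add : forall x y, core x -> core y -> core (x + y)
  | core_scale : forall (a : CC) x, core x -> core (a *: x)
  | core_br : forall x y, core x -> core y -> core (br x y).

Definition core_perp (x : E) : Prop := forall y, core y -> form x y = 0.

Definition core_center (x : E) : Prop := core x /\ forall y, core y -> br x y = 0.

Definition tame : Prop := forall x, core_perp x <-> core_center x.

Inductive bracket_sum (sigma : E -> CC) : E -> Prop :=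
  | bs_gen : forall alpha x y, Rx alpha -> root_space (fadd alpha sigma) x ->
      root_space (fopp alpha) y -> bracket_sum sigma (br x y)
  | bs_zero : bracket_sum sigma 0
  | bs_add : forall x y, bracket_sum sigma x -> bracket_sum sigma y ->
      bracket_sum sigma (x + y)
  | bs_scale : forall (a : CC) x, bracket_sum sigma x -> bracket_sum sigma (a *: x).

End EALA.

(* Main.v *)
Require Import Defs.
From mathcomp Require Import all_boot all_order all_algebra complex.
From mathcomp Require Import Rstruct.
From Stdlib Require Import Classical.
Set Implicit Arguments.
Unset Strict Implicit.
Unset Printing Implicit Defensive.
Import Order.TTheory GRing.Theory Num.Theory.
Local Open Scope ring_scope.

Section S.
Variable E : lmodType CC.
Variable br : E -> E -> E.
Variable form : E -> E -> CC.
Variable H : E -> Prop.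
Hypothesis Hlie : is_lie_algebra br.
Hypothesis Hea1 : EA1 br form.
Hypothesis Hdec : forall x : E, exists s : seq ((E -> CC) * E),
        (forall p, List.In p s -> root_space br H p.1 p.2) /\
        x = \sum_(p <- s) p.2.
Hypothesis HH : forall x, root_space br H (@fzero E) x <-> H x.

Local Notation rs := (root_space br H).
Definition agree (f g : E -> CC) := forall h, H h -> f h = g h.

Lemma brDl x y z : br (x + y) z = br x z + br y z.
Proof. case: Hlie => L _ _ _. by have := L 1 x y z; rewrite !scale1r. Qed.
Lemma brDr x y z : br z (x + y) = br z x + br z y.
Proof. case: Hlie => _ L _ _. by have := L 1 x y z; rewrite !scale1r. Qed.
Lemma br0l z : br 0 z = 0.
Proof. have := brDl 0 0 z; rewrite addr0 => /eqP; rewrite -subr_eq0.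
by rewrite opprD addrA subrr add0r oppr_eq0 => /eqP. Qed.
Lemma br0r z : br z 0 = 0.
Proof. have := brDr 0 0 z; rewrite addr0 => /eqP; rewrite -subr_eq0.
by rewrite opprD addrA subrr add0r oppr_eq0 => /eqP. Qed.
Lemma brZl a x z : br (a *: x) z = a *: br x z.
Proof. case: Hlie => L _ _ _. by have := L a x 0 z; rewrite !addr0 br0l addr0. Qed.
Lemma brZr a x z : br z (a *: x) = a *: br z x.
Proof. case: Hlie => _ L _ _. by have := L a x 0 z; rewrite !addr0 br0r addr0. Qed.
Lemma brNl x z : br (- x) z = - br x z.
Proof. by rewrite -scaleN1r brZl scaleN1r. Qed.
Lemma brNr x z : br z (- x) = - br z x.
Proof. by rewrite -scaleN1r brZr scaleN1r. Qed.
Lemma br_anti x y : br x y = - br y x.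
Proof. case: Hlie => _ _ A _.
have := A (x + y); rewrite brDl !brDr !A add0r addr0 => /eqP.
by rewrite addr_eq0 => /eqP. Qed.
Lemma br_der h x y : br h (br x y) = br (br h x) y + br x (br h y).
Proof. case: Hlie => _ _ _ J.
have := J h x y => /eqP; rewrite -addrA addr_eq0 => /eqP ->.
rewrite [br y h]br_anti brNr [br y (br h x)]br_anti opprD !opprK addrC. by []. Qed.

Lemma br_suml (s : seq ((E -> CC) * E)) (F : (E -> CC) * E -> E) z :
  br (\sum_(p <- s) F p) z = \sum_(p <- s) br (F p) z.
Proof. elim: s => [|p s IH]; rewrite ?big_nil ?br0l // !big_cons brDl IH //. Qed.
Lemma br_sumr (s : seq ((E -> CC) * E)) (F : (E -> CC) * E -> E) z :
  br z (\sum_(p <- s) F p) = \sum_(p <- s) br z (F p).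
Proof. elim: s => [|p s IH]; rewrite ?big_nil ?br0r // !big_cons brDr IH //. Qed.

Lemma formDl x y z : form (x + y) z = form x z + form y z.
Proof. case: Hea1 => L _ _ _. by have := L 1 x y z; rewrite !scale1r mul1r. Qed.
Lemma form0l z : form 0 z = 0.
Proof. have := formDl 0 0 z; rewrite addr0 => /eqP; rewrite -subr_eq0.
by rewrite opprD addrA subrr add0r oppr_eq0 => /eqP. Qed.
Lemma formZl a x z : form (a *: x) z = a * form x z.
Proof. case: Hea1 => L _ _ _. by have := L a x 0 z; rewrite !addr0 form0l addr0. Qed.
Lemma formC x y : form x y = form y x.
Proof. by case: Hea1. Qed.
Lemma formDr x y z : form z (x + y) = form z x + form z y.
Proof. by rewrite formC formDl !(formC z). Qed.
Lemma formZr a x z : form z (a *: x) = a * form z x.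
Proof. by rewrite formC formZl formC. Qed.
Lemma form0r z : form z 0 = 0.
Proof. by rewrite formC form0l. Qed.
Lemma formNl x z : form (- x) z = - form x z.
Proof. by rewrite -scaleN1r formZl mulN1r. Qed.
Lemma formNr x z : form z (- x) = - form z x.
Proof. by rewrite -scaleN1r formZr mulN1r. Qed.
Lemma form_inv x y z : form (br x y) z = form x (br y z).
Proof. by case: Hea1. Qed.
Lemma form_nondeg x : (forall y, form x y = 0) -> x = 0.
Proof. by case: Hea1 => _ _ N _; apply: N. Qed.

Lemma form_suml (s : seq ((E -> CC) * E)) (F : (E -> CC) * E -> E) z :
  form (\sum_(p <- s) F p) z = \sum_(p <- s) form (F p) z.
Proof. elim: s => [|p s IH]; rewrite ?big_nil ?form0l // !big_cons formDl IH //. Qed.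
Lemma form_sumr (s : seq ((E -> CC) * E)) (F : (E -> CC) * E -> E) z :
  form z (\sum_(p <- s) F p) = \sum_(p <- s) form z (F p).
Proof. elim: s => [|p s IH]; rewrite ?big_nil ?form0r // !big_cons formDr IH //. Qed.

Lemma sum_zero_In (V : nmodType) (s : seq ((E -> CC) * E)) (F : (E -> CC) * E -> V) :
  (forall p, List.In p s -> F p = 0) -> \sum_(p <- s) F p = 0.
Proof. elim: s => [|p s IH] Hs; first by rewrite big_nil.
rewrite big_cons (Hs p); last by left.
rewrite IH ?addr0 // => q Hq; apply: Hs; by right. Qed.

Lemma rs0 a : rs a 0.
Proof. by move=> h _; rewrite br0r scaler0. Qed.
Lemma rsD a x y : rs a x -> rs a y -> rs a (x + y).
Proof. by move=> Hx Hy h Hh; rewrite brDr Hx // Hy // scalerDr. Qed.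
Lemma rsZ a c x : rs a x -> rs a (c *: x).
Proof. by move=> Hx h Hh; rewrite brZr Hx // !scalerA mulrC. Qed.
Lemma rsN a x : rs a x -> rs a (- x).
Proof. by move=> Hx; rewrite -scaleN1r; apply: rsZ. Qed.
Lemma rs_agree a b x : agree a b -> rs a x -> rs b x.
Proof. by move=> Ag Hx h Hh; rewrite Hx // Ag. Qed.
Lemma rs_sum a (s : seq ((E -> CC) * E)) :
  (forall p, List.In p s -> rs a p.2) -> rs a (\sum_(p <- s) p.2).
Proof. elim: s => [|p s IH] Hs; rewrite ?big_nil ?big_cons; first exact: rs0.
apply: rsD; first by apply: Hs; left. apply: IH => q Hq; apply: Hs; by right. Qed.

Lemma nagree f g : ~ agree f g -> exists h, H h /\ f h != g h.
Proof. move=> N; apply: NNPP => N2; apply: N => h Hh; apply: NNPP => N3.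
apply: N2; exists h; split => //; exact/eqP. Qed.

Lemma pairing a b y z : rs a y -> rs b z -> (exists h, H h /\ a h + b h != 0) ->
  form y z = 0.
Proof. move=> Hy Hz [h [Hh Hne]].
have E1 : form (br h y) z = a h * form y z by rewrite Hy // formZl.
have E2 : form (br h y) z = - (b h * form y z).
  by rewrite br_anti formNl form_inv Hz // formZr.
have : (a h + b h) * form y z = 0.
  by rewrite mulrDl -E1 -[b h * _]opprK -E2 subrr.
by move/eqP; rewrite mulf_eq0 (negbTE Hne) /= => /eqP. Qed.

Local Notation RX := (Rx br form H).
Local Notation NI := (nonisotropic form H).
Local Notation CORE := (core br form H).
Local Notation BS := (bracket_sum br form H).

Lemma sum_eq_In (V : nmodType) (s : seq ((E -> CC) * E)) (F G : (E -> CC) * E -> V) :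
  (forall p, List.In p s -> F p = G p) -> \sum_(p <- s) F p = \sum_(p <- s) G p.
Proof. elim: s => [|p s IH] Hs; first by rewrite !big_nil.
rewrite !big_cons (Hs p); last by left.
rewrite IH // => q Hq; apply: Hs; by right. Qed.

Lemma noniso_agree a b : agree a b -> NI a -> NI b.
Proof. move=> Ag [t [[Ht Hta] Hne]]; exists t; split=> //; split=> // h Hh.
by rewrite -Ag // Hta. Qed.

Lemma H_opp t : H t -> H (- t).
Proof. by move/HH => /rsN /HH. Qed.

Lemma noniso_opp a : NI a -> NI (fopp a).
Proof. move=> [t [[Ht Hta] Hne]]; exists (- t); split.
  split; first exact: H_opp. by move=> h Hh; rewrite /fopp Hta // formNr.
by rewrite formNl formNr opprK. Qed.

Lemma sum_nz (s : seq ((E -> CC) * E)) (F : (E -> CC) * E -> CC) :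
  \sum_(p <- s) F p != 0 -> exists p, List.In p s /\ F p != 0.
Proof. elim: s => [|p s IH]; first by rewrite big_nil eqxx.
rewrite big_cons => Hne. case: (classic (F p = 0)) => Hp.
  move: Hne; rewrite Hp add0r => /IH [q [Hq Hq2]]; exists q; split=> //; by right.
exists p; split; [by left | exact/eqP]. Qed.

Lemma pair_nonzero a y z : rs a y -> form y z != 0 ->
  exists w, rs (fopp a) w /\ form y w != 0.
Proof. move=> Hy Hne. case: (Hdec z) => s [Hs Ez]; rewrite Ez form_sumr in Hne.
have [p [Hin Hne2]] := sum_nz Hne.
exists p.2; split=> //.
have Hag : forall h, H h -> a h + p.1 h = 0.
  move=> h Hh; apply: NNPP => N; move: Hne2; rewrite (pairing Hy (Hs p Hin)) ?eqxx //.
  exists h; split=> //; exact/eqP.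
move=> h Hh; rewrite (Hs p Hin h Hh) /fopp; congr (_ *: _).
apply/eqP; rewrite -addr_eq0 addrC; exact/eqP/Hag. Qed.

Lemma nondeg_ex x : x != 0 -> exists z, form x z != 0.
Proof. move=> Hx; apply: NNPP => N; move/eqP: Hx; apply; apply: form_nondeg => y.
apply: NNPP => N2; apply: N; exists y; exact/eqP. Qed.

Lemma Rx_opp a : RX a -> RX (fopp a).
Proof. move=> [[y [Hy Hy0]] Hni]; split; last exact: noniso_opp.
have [z Hz] := nondeg_ex (introN eqP Hy0).
have [w [Hw Hfw]] := pair_nonzero Hy Hz.
exists w; split => // Ew; move: Hfw; by rewrite Ew form0r eqxx. Qed.

Lemma direct_n sg n (l : seq ((E -> CC) * E)) : (size l <= n)%N ->
  (forall q, List.In q l -> rs q.1 q.2 /\ ~ agree q.1 sg) ->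
  rs sg (\sum_(q <- l) q.2) -> \sum_(q <- l) q.2 = 0.
Proof.
elim: n l => [|n IH] [|p l] //= Hsz Hl Hz; try by rewrite big_nil.
have [Hp Np] := Hl p (or_introl erefl).
have [h [Hh Hne]] := nagree Np.
set z := \sum_(q <- p :: l) q.2 in Hz *.
pose l' := map (fun q : (E -> CC) * E => (q.1, (q.1 h - p.1 h) *: q.2)) l.
have Hl' : forall q, List.In q l' -> rs q.1 q.2 /\ ~ agree q.1 sg.
  move=> q /List.in_map_iff [r [<- Hr]] /=.
  have [Hr1 Hr2] := Hl r (or_intror Hr). split=> //; exact: rsZ.
have Esum : \sum_(q <- l') q.2 = (sg h - p.1 h) *: z.
  have Hbz : br h z = sg h *: z := Hz h Hh.
  rewrite big_map /= scalerBl -Hbz /z big_cons brDr br_sumr (Hp h Hh) scalerDr scaler_sumr.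
  rewrite (@sum_eq_In _ l (fun r => br h r.2) (fun r => r.1 h *: r.2)); last first.
    move=> r Hr; have [Hr1 _] := Hl r (or_intror Hr); exact: Hr1.
  rewrite opprD addrACA subrr add0r -sumrB.
  by apply: eq_bigr => r _; rewrite scalerBl.
have Hsz' : (size l' <= n)%N by rewrite /l' size_map.
have := IH l' Hsz' Hl'. rewrite Esum => Hz0.
have /eqP := Hz0 (rsZ _ Hz). rewrite scaler_eq0 subr_eq0 => /orP [/eqP E1|/eqP //].
by rewrite E1 eqxx in Hne. Qed.

Lemma direct sg (l : seq ((E -> CC) * E)) :
  (forall q, List.In q l -> rs q.1 q.2 /\ ~ agree q.1 sg) ->
  rs sg (\sum_(q <- l) q.2) -> \sum_(q <- l) q.2 = 0.
Proof. exact: (@direct_n sg (size l)). Qed.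

Lemma partition (P : (E -> CC) * E -> Prop) b (s : seq ((E -> CC) * E)) :
  (forall p, List.In p s -> P p) ->
  exists l1 l2, [/\ (forall q, List.In q l1 -> P q /\ agree q.1 b),
   (forall q, List.In q l2 -> P q /\ ~ agree q.1 b),
   \sum_(p <- s) p.2 = \sum_(q <- l1) q.2 + \sum_(q <- l2) q.2 &
   (size l2 <= size s)%N].
Proof.
elim: s => [|p s IH] Hs.
  by exists [::], [::]; split => //; rewrite !big_nil addr0.
have [l1 [l2 [H1 H2 Es Hsz]]] : exists l1 l2, [/\ (forall q, List.In q l1 -> P q /\ agree q.1 b),
   (forall q, List.In q l2 -> P q /\ ~ agree q.1 b),
   \sum_(p <- s) p.2 = \sum_(q <- l1) q.2 + \sum_(q <- l2) q.2 &
   (size l2 <= size s)%N].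
  apply: IH => q Hq; apply: Hs; by right.
have Pp : P p by apply: Hs; left.
case: (classic (agree p.1 b)) => Ag.
  exists (p :: l1), l2; split => //=.
  - by move=> q [<-|Hq]; [split | apply: H1].
  - by rewrite !big_cons Es addrA.
  - exact: leqW.
exists l1, (p :: l2); split => //=.
- by move=> q [<-|Hq]; [split | apply: H2].
- by rewrite !big_cons Es addrCA.
Qed.

Inductive RN : (E -> CC) -> E -> Prop :=
| RN_gen a x : RX a -> rs a x -> RN a x
| RN_br a x d w : RX a -> rs a x -> RN d w -> RN (fadd a d) (br x w).

Definition SP (y : E) := exists s : seq ((E -> CC) * E),
  (forall p, List.In p s -> RN p.1 p.2) /\ y = \sum_(p <- s) p.2.

Lemma RN_rs d y : RN d y -> rs d y.
Proof. elim=> [a x _ Hx|a x d' w _ Hx _ Hw] //.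
by move=> h Hh; rewrite br_der (Hx h Hh) (Hw h Hh) brZl brZr -scalerDl. Qed.

Lemma RN_core d y : RN d y -> CORE y.
Proof. elim=> [a x Ha Hx|a x d' w Ha Hx _ Hw].
  exact: core_root Ha Hx.
apply: core_br => //; exact: core_root Ha Hx. Qed.

Lemma SP0 : SP 0.
Proof. by exists [::]; rewrite big_nil. Qed.
Lemma SP1 d y : RN d y -> SP y.
Proof. move=> Hy; exists [:: (d, y)]; split; last by rewrite big_cons big_nil addr0.
by move=> p [<-|]. Qed.
Lemma SPD x y : SP x -> SP y -> SP (x + y).
Proof. move=> [s1 [H1 ->]] [s2 [H2 ->]]; exists (s1 ++ s2); split; last by rewrite big_cat.
by move=> p Hp; case: (List.in_app_or _ _ _ Hp); [exact: H1 | exact: H2]. Qed.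
Lemma RN_scale c d y : RN d y -> RN d (c *: y).
Proof. case=> [a x Ha Hx|a x d' w Ha Hx Hw].
  apply: RN_gen => //; exact: rsZ.
rewrite -brZl; apply: RN_br => //; exact: rsZ. Qed.
Lemma SPZ c x : SP x -> SP (c *: x).
Proof. move=> [s [Hs ->]]; exists (map (fun p : (E -> CC) * E => (p.1, c *: p.2)) s); split.
  move=> q /List.in_map_iff [r [<- Hr]] /=; apply: RN_scale; exact: Hs.
by rewrite big_map scaler_sumr. Qed.
Lemma SP_sum (s : seq ((E -> CC) * E)) (F : (E -> CC) * E -> E) :
  (forall p, List.In p s -> SP (F p)) -> SP (\sum_(p <- s) F p).
Proof. elim: s => [|p s IH] Hs; first by rewrite big_nil; exact: SP0.
rewrite big_cons; apply: SPD; first by apply: Hs; left.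
apply: IH => q Hq; apply: Hs; by right. Qed.

Lemma SP_br_gen a x v : RX a -> rs a x -> SP v -> SP (br x v).
Proof. move=> Ha Hx [s [Hs ->]]; rewrite br_sumr; apply: SP_sum => p Hp.
apply: (SP1 (RN_br Ha Hx (Hs p Hp))). Qed.

Lemma RN_br_SP m u : RN m u -> forall n v, RN n v -> SP (br u v).
Proof. elim=> [a x Ha Hx|a x d w Ha Hx Hw IH] n v Hv.
  apply: SP1; exact: RN_br Ha Hx Hv.
have -> : br (br x w) v = br x (br w v) + (-1) *: br w (br x v).
  by rewrite br_der scaleN1r addrK.
apply: SPD; first exact: (SP_br_gen Ha Hx (IH _ _ Hv)).
apply: SPZ; exact: (IH _ _ (RN_br Ha Hx Hv)). Qed.

Lemma SP_br u v : SP u -> SP v -> SP (br u v).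
Proof. move=> [s [Hs ->]] [t [Ht ->]]; rewrite br_suml; apply: SP_sum => p Hp.
rewrite br_sumr; apply: SP_sum => q Hq; apply: (RN_br_SP (Hs p Hp)); exact: Ht. Qed.

Lemma core_SP x : CORE x -> SP x.
Proof. elim=> [a y Ha Hy| |y z _ Hy _ Hz|c y _ Hy|y z _ Hy _ Hz].
- apply: SP1; exact: RN_gen Ha Hy.
- exact: SP0.
- exact: SPD.
- exact: SPZ.
- exact: SP_br. Qed.

Lemma bs_rs sg x : BS sg x -> rs sg x.
Proof. elim=> [a y z Ha Hy Hz| |y z _ Hy _ Hz|c y _ Hy].
- move=> h Hh; rewrite br_der (Hy h Hh) (Hz h Hh) brZl brZr -scalerDl /fadd /fopp.
  by rewrite addrAC subrr add0r.
- exact: rs0.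
- exact: rsD.
- exact: rsZ. Qed.

Lemma bs_sum sg (s : seq ((E -> CC) * E)) :
  (forall p, List.In p s -> BS sg p.2) -> BS sg (\sum_(p <- s) p.2).
Proof. elim: s => [|p s IH] Hs; first by rewrite big_nil; exact: bs_zero.
rewrite big_cons; apply: bs_add; first by apply: Hs; left.
apply: IH => q Hq; apply: Hs; by right. Qed.

Lemma RN_good sg d y : RN d y -> R0 br form H sg -> agree d sg -> BS sg y.
Proof. case=> [a x Ha Hx|a x d' w Ha Hx Hw] [_ Nsg] Ag.
  by exfalso; apply: Nsg; apply: (noniso_agree Ag); case: Ha.
have Hw' := RN_rs Hw.
rewrite br_anti -scaleN1r; apply: bs_scale.
apply: (@bs_gen _ _ _ _ _ (fopp a)); first exact: Rx_opp.
  move=> h Hh; rewrite Hw' // /fadd /fopp -(Ag h Hh) /fadd.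
  by rewrite addrA addNr add0r.
by move=> h Hh; rewrite Hx // /fopp opprK. Qed.

Lemma FWD sg x : R0 br form H sg -> CORE x -> rs sg x -> BS sg x.
Proof. move=> Hsg /core_SP [s [Hs Ex]] Hx.
have [l1 [l2 [H1 H2 Es _]]] := partition sg Hs.
have B1 : BS sg (\sum_(q <- l1) q.2).
  apply: bs_sum => q Hq; have [Hq1 Hq2] := H1 q Hq; exact: RN_good Hq1 Hsg Hq2.
have Z2 : \sum_(q <- l2) q.2 = 0.
  apply: (@direct sg).
    by move=> q Hq; have [Hq1 Hq2] := H2 q Hq; split=> //; exact: RN_rs.
  have -> : \sum_(q <- l2) q.2 = x + (-1) *: \sum_(q <- l1) q.2.
    by rewrite Ex Es scaleN1r addrAC subrr add0r.
  apply: rsD => //; apply: rsZ; exact: bs_rs.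
by rewrite Ex Es Z2 addr0. Qed.

Lemma center0 : core_center br form H 0.
Proof. split; [exact: core_zero | move=> y _; exact: br0l]. Qed.

Lemma centerD x y : core_center br form H x -> core_center br form H y ->
  core_center br form H (x + y).
Proof. move=> [Hx Cx] [Hy Cy]; split; first exact: core_add.
by move=> z Hz; rewrite brDl Cx // Cy // addr0. Qed.

Lemma H_add x y : H x -> H y -> H (x + y).
Proof. by move=> /HH Hx /HH Hy; apply/HH; apply: rsD. Qed.
Lemma H_scale c x : H x -> H (c *: x).
Proof. by move=> /HH Hx; apply/HH; apply: rsZ. Qed.

Lemma Hperp_zero u : H u -> (forall h, H h -> form h u = 0) -> u = 0.
Proof. move=> Hu Hp; apply: form_nondeg => y.
case: (Hdec y) => s [Hs ->]; rewrite form_sumr; apply: sum_zero_In => p Hin.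
case: (classic (exists h, H h /\ fzero h + p.1 h != 0)) => [Hex|Nex].
  apply: (pairing (proj2 (HH u) Hu) (Hs p Hin) Hex).
have Hp2 : H p.2.
  apply/HH => h Hh; rewrite (Hs p Hin h Hh); congr (_ *: _).
  apply: NNPP => N; apply: Nex; exists h; split => //; rewrite /fzero add0r; exact/eqP.
by rewrite formC Hp. Qed.

Lemma CP x : core_center br form H x -> core_perp br form H x.
Proof. move=> [Hxc Hcen] y /core_SP [s [Hs ->]]; rewrite form_sumr.
apply: sum_zero_In => p Hp; case: (Hs p Hp) => [a z Ha Hz | a z d w Ha Hz Hw].
  case: (classic (z = 0)) => [->|Hz0]; first by rewrite form0r.
  have [c0 Hc0] := nondeg_ex (introN eqP Hz0).
  have [c [Hc Hfc]] := pair_nonzero Hz Hc0.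
  have Hcc : CORE c := core_root (Rx_opp Ha) Hc.
  have [t [[Ht Hta] Htt]] := Ha.2.
  have Eb : br z c = form z c *: t.
    apply/eqP; rewrite -subr_eq0; apply/eqP; apply: Hperp_zero.
      apply: H_add; last by apply: H_opp; apply: H_scale.
      apply/HH => h Hh; rewrite br_der (Hz h Hh) (Hc h Hh) brZl brZr -scalerDl.
      by rewrite /fzero /fopp subrr !scale0r.
    move=> h Hh; rewrite formDr formNr formZr -form_inv (Hz h Hh) formZl -Hta //.
    by rewrite mulrC subrr.
  have Etc : t = (form z c)^-1 *: br z c by rewrite Eb scalerA mulVf // scale1r.
  have Htc : CORE t by rewrite Etc; apply: core_scale; apply: core_br => //; exact: core_root Ha Hz.
  have Ezt : z = (a t)^-1 *: br t z.
    by rewrite (Hz t Ht) scalerA mulVf ?scale1r // Hta.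
  by rewrite Ezt formZr -form_inv Hcen // form0l mulr0.
by rewrite -form_inv Hcen ?form0l //; exact: core_root Ha Hz. Qed.

Lemma BWD (C : forall sg x, R0 br form H sg -> rs sg x -> core_perp br form H x ->
    core_center br form H x) n (s : seq ((E -> CC) * E)) : (size s <= n)%N ->
  (forall p, List.In p s -> rs p.1 p.2) -> core_perp br form H (\sum_(p <- s) p.2) ->
  core_center br form H (\sum_(p <- s) p.2).
Proof.
elim: n s => [|n IH] [|p s] //= Hsz Hs Hperp; try (rewrite big_nil; exact: center0).
have Hp : rs p.1 p.2 by apply: Hs; left.
have [l1 [l2 [H1 H2 Es Hsz2]]] :=
  @partition (fun q => rs q.1 q.2) p.1 s (fun q Hq => Hs q (or_intror Hq)).
set c := p.2 + \sum_(q <- l1) q.2.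
have Hc : rs p.1 c.
  apply: rsD => //; apply: rs_sum => q Hq; have [Hq1 Hq2] := H1 q Hq.
  exact: rs_agree Hq2 Hq1.
have Ex : \sum_(q <- p :: s) q.2 = c + \sum_(q <- l2) q.2 by rewrite big_cons Es addrA.
have Hcp : core_perp br form H c.
  move=> y /core_SP [t [Ht ->]]; rewrite form_sumr; apply: sum_zero_In => q Hq.
  have Hq2 := RN_rs (Ht q Hq).
  case: (classic (exists h, H h /\ p.1 h + q.1 h != 0)) => [Hex|Nex].
    exact: pairing Hc Hq2 Hex.
  have Hag : forall h, H h -> p.1 h + q.1 h = 0.
    move=> h Hh; apply: NNPP => N; apply: Nex; exists h; split => //; exact/eqP.
  have Hxq : form (\sum_(q <- p :: s) q.2) q.2 = 0 := Hperp _ (RN_core (Ht q Hq)).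
  have Z : \sum_(r <- l2) form r.2 q.2 = 0.
    apply: sum_zero_In => r Hr; have [Hr1 Hr2] := H2 r Hr.
    apply: pairing Hr1 Hq2 _; have [h [Hh Hne]] := nagree Hr2.
    exists h; split => //.
    have -> : q.1 h = - p.1 h by apply/eqP; rewrite -addr_eq0 addrC Hag.
    by rewrite subr_eq0.
  by move: Hxq; rewrite Ex formDl form_suml Z addr0.
have Hperp2 : core_perp br form H (\sum_(q <- l2) q.2).
  have E2 : \sum_(q <- l2) q.2 = \sum_(q <- p :: s) q.2 + (-1) *: c.
    by rewrite Ex scaleN1r addrAC subrr add0r.
  by move=> y Hy; rewrite E2 formDl formZl Hperp // Hcp // mulr0 addr0.
have IHc : core_center br form H (\sum_(q <- l2) q.2).
  apply: IH; last exact: Hperp2.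
    exact: leq_trans Hsz2 Hsz.
  by move=> q Hq; case: (H2 q Hq).
have Hcc : core_center br form H c.
  case: (classic (c = 0)) => [->|Hc0]; first exact: center0.
  case: (classic (NI p.1)) => Hni.
    exfalso.
    have [z Hz] := nondeg_ex (introN eqP Hc0).
    have [w [Hw Hfw]] := pair_nonzero Hc Hz.
    have Hw0 : w <> 0 by move=> Ew; move: Hfw; rewrite Ew form0r eqxx.
    have HRx : RX (fopp p.1) := conj (ex_intro _ w (conj Hw Hw0)) (noniso_opp Hni).
    by move: Hfw; rewrite (Hcp w (core_root HRx Hw)) eqxx.
  apply: (C p.1 c) => //; split => //; by exists c.
by rewrite Ex; apply: centerD. Qed.

Lemma main_S : tame br form H <->
   forall sigma : E -> CC, R0 br form H sigma ->
     forall x : E,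
       (root_space br H sigma x /\ core_perp br form H x) <->
       (core_center br form H x /\ bracket_sum br form H sigma x).
Proof. split.
  move=> Ht sg Hsg x; split.
    move=> [Hx Hp]; have Hc := (Ht x).1 Hp; split => //.
    exact: FWD Hsg Hc.1 Hx.
  move=> [Hc Hb]; split; [exact: bs_rs | exact: (Ht x).2].
move=> C x; split; last exact: CP.
move=> Hp; case: (Hdec x) => s [Hs Ex]; rewrite Ex in Hp *.
apply: (@BWD _ (size s)) => //.
by move=> sg y Hsg Hy Hy2; case: ((C sg Hsg y).1 (conj Hy Hy2)).
Qed.

End S.

Theorem lemma2p7 (E : lmodType CC) (br : E -> E -> E) (form : E -> E -> CC)
    (H : E -> Prop) :
  is_EALA br form H ->
  (tame br form H <->
   forall sigma : E -> CC, R0 br form H sigma ->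
     forall x : E,
       (root_space br H sigma x /\ core_perp br form H x) <->
       (core_center br form H x /\ bracket_sum br form H sigma x)).
Proof.
move=> [Hlie Hea1 [_ _ Hdec HH0] _ _].
by apply: main_S.
Qed.
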